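(* Let $X$ be an eventually dendric shift space. For every $k\ge1$ there is an $n\ge1$ such that the following holds: whenever $p,w\in\mathcal L(X)$ with $|p|\le k$ and $|w|\ge n$ are such that both $pw$ and $w$ are left-special, there is a letter $b\in A$ which is the unique letter such that $wb$ is left-special and also the unique letter such that $pwb$ is left-special, and moreover $\ell(pwb)=\ell(pw)$ and $\ell(wb)=\ell(w)$.
   Context: $A$ is a finite alphabet; a shift space is a closed shift-invariant subset $X\subseteq A^{\mathbb Z}$; $\mathcal L(X)$ is its set of finite factors, $\mathcal L_{\ge m}(X)$ its words of length $\ge m$. For $w\in\mathcal L(X)$, $\ell(w)=\mathrm{Card}\{a\in A:aw\in\mathcal L(X)\}$, and $w$ is left-special if $\ell(w)\ge2$. The extension graph $\mathcal E_1(w)$ is the undirected bipartite graph with vertex set the disjoint union of $\{a\in A: aw\in\mathcal L(X)\}$ and $\{b\in A: wb\in\mathcal L(X)\}$ and an edge $(a,b)$ iff $awb\in\mathcal L(X)$. $X$ is eventually dendric if for some $m\ge0$, $\mathcal E_1(w)$ is a tree for every $w\in\mathcal L_{\ge m}(X)$. *)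

(* Defs.v *)
From HB Require Import structures.
From mathcomp Require Import all_boot all_order all_algebra.
From Stdlib Require Import ClassicalEpsilon.
Set Implicit Arguments. Unset Strict Implicit. Unset Printing Implicit Defensive.
Import GRing.Theory Num.Theory.

Definition asbool (P : Prop) : bool :=
  if excluded_middle_informative P then true else false.

Section Shift.
Variable A : finType.

Definition config := int -> A.

Definition window (x : config) (i : int) (n : nat) : seq A :=
  [seq x (i + (k%:Z))%R | k <- iota 0 n].

Definition shift (x : config) : config := fun i => x (i + 1)%R.
Definition unshift (x : config) : config := fun i => x (i - 1)%R.

(* X is closed (product topology: cylinders) and shift-invariant (sigma X = X). *)
Definition shift_space (X : config -> Prop) : Prop :=
  [/\ (forall x, X x -> X (shift x)),
      (forall x, X x -> X (unshift x)) &
      (forall x, (forall i n, exists2 y, X y & window y i n = window x i n) -> X x)].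

Definition inL (X : config -> Prop) (w : seq A) : bool :=
  asbool (exists x, exists i, X x /\ window x i (size w) = w).

Definition ell (X : config -> Prop) (w : seq A) : nat :=
  #|[set a : A | inL X (a :: w)]|.

Definition left_special (X : config -> Prop) (w : seq A) : bool := 2 <= ell X w.

(* Extension graph E_1(w): vertices inl a (left copy, a w in L) and
   inr b (right copy, w b in L); undirected edges {inl a, inr b} iff a w b in L. *)
Definition ext_vertex (X : config -> Prop) (w : seq A) (v : A + A) : bool :=
  match v with
  | inl a => inL X (a :: w)
  | inr b => inL X (rcons w b)
  end.

Definition ext_edge (X : config -> Prop) (w : seq A) : rel (A + A) :=
  fun u v =>
    match u, v with
    | inl a, inr b => inL X (a :: rcons w b)
    | inr b, inl a => inL X (a :: rcons w b)
    | _, _ => false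
    end.

Definition is_tree (T : finType) (V : pred T) (e : rel T) : Prop :=
  [/\ (exists v, V v),
      (forall u v, V u -> V v -> connect e u v) &
      (forall c : seq T, all V c -> cycle e c -> uniq c -> size c < 3)].

Definition eventually_dendric (X : config -> Prop) : Prop :=
  exists m : nat, forall w : seq A, inL X w -> m <= size w ->
    is_tree (ext_vertex X w) (ext_edge X w).

End Shift.

(* Main.v *)
Require Import Defs.
From mathcomp Require Import all_boot all_order all_algebra zify.
From Stdlib Require Import Classical ClassicalEpsilon.
Set Implicit Arguments. Unset Strict Implicit. Unset Printing Implicit Defensive.

Lemma asboolP (P : Prop) : asbool P = true <-> P.
Proof. rewrite /asbool; case: excluded_middle_informative => //. Qed.

Section L.
Variable (A : finType) (X : config A -> Prop).

Lemma window_cat (x : config A) i n k :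
  window x i (n + k) = window x i n ++ window x (i + n%:Z)%R k.
Proof.
rewrite /window iotaD map_cat add0n; congr (_ ++ _).
rewrite -[n in iota n _]addn0 iotaDl -map_comp; apply: eq_map => j /=.
by rewrite PoszD GRing.addrA.
Qed.

Lemma inL_cat s1 s2 : inL X (s1 ++ s2) -> inL X s1 /\ inL X s2.
Proof.
move/asboolP=> [x [i [Xx]]]; rewrite size_cat window_cat => E.
have /eqP := E; rewrite eqseq_cat ?size_map ?size_iota // => /andP[/eqP E1 /eqP E2].
by split; apply/asboolP; exists x; [exists i | exists (i + (size s1)%:Z)%R].
Qed.

Lemma inL_consr a s : inL X (a :: s) -> inL X s.
Proof. by move=> H; case: (inL_cat (s1:=[:: a]) H). Qed.
Lemma inL_rconsl s b : inL X (rcons s b) -> inL X s.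
Proof. by rewrite -cats1 => /inL_cat []. Qed.
Lemma inL_pre a s b : inL X (a :: rcons s b) -> inL X (a :: s).
Proof. by rewrite -rcons_cons; apply: inL_rconsl. Qed.
Lemma inL_suf a s b : inL X (a :: rcons s b) -> inL X (rcons s b).
Proof. exact: inL_consr. Qed.

Lemma ell_pos_inL s : 0 < ell X s -> inL X s.
Proof. by move/card_gt0P=> [a]; rewrite inE => /inL_consr. Qed.

Lemma LS_inL s : left_special X s -> inL X s.
Proof. by rewrite /left_special => H; apply: ell_pos_inL; apply: leq_trans H. Qed.

Lemma ell_rcons_le s b : ell X (rcons s b) <= ell X s.
Proof. by apply: subset_leq_card; apply/subsetP=> a; rewrite !inE; apply: inL_pre. Qed.

Lemma ell_notL s b : ~~ inL X s -> ell X (rcons s b) = 0.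
Proof.
move=> H; apply/eqP; rewrite cards_eq0; apply/eqP/setP=> a; rewrite !inE.
by apply/negP=> /inL_pre /inL_consr; apply/negP.
Qed.

Lemma LS_prefix s b : left_special X (rcons s b) -> left_special X s.
Proof. by rewrite /left_special => H; apply: leq_trans H (ell_rcons_le _ _). Qed.

End L.

Lemma conn_closed (T : finType) (r : rel T) (P : pred T) x y :
  connect r x y -> P x -> (forall u v, P u -> r u v -> P v) -> P y.
Proof.
move=> /connectP [p pth ->] Px cl; elim: p x pth Px => [|z p IH] x //=.
by move=> /andP[rxz pth] Px; apply: IH pth (cl _ _ Px rxz).
Qed.

Lemma path_all_target (T : Type) (r : rel T) (P : pred T) x p :
  path r x p -> (forall u v, r u v -> P v) -> all P p.
Proof.
move=> pth H; elim: p x pth => [|z p IH] x //= /andP[rxz pth].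
by rewrite (H _ _ rxz) (IH _ pth).
Qed.

Section G.
Variable (A : finType) (X : config A -> Prop) (w : seq A).
Local Notation e := (ext_edge X w).
Local Notation V := (ext_vertex X w).

Lemma e_sym : symmetric e.
Proof. by case=> [a|b] [a'|b']. Qed.

Lemma e_V u v : e u v -> V v.
Proof. by case: u v => [a|b] [a'|b'] //= /[dup] /inL_suf ? /inL_pre. Qed.

Hypothesis tree : is_tree (ext_vertex X w) (ext_edge X w).

Lemma isolation a : inL X (a :: w) ->
  (forall c, inL X (a :: rcons w c) -> ell X (rcons w c) <= 1) ->
  forall a', inL X (a' :: w) -> a' = a.
Proof.
move=> Ha H a' Ha'; case: tree => _ conn _.
have := conn (inl a) (inl a') Ha Ha'.
move/conn_closed => /(_ (fun u => match u with inl x => x == a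
                                   | inr c => inL X (a :: rcons w c) end)).
move=> /(_ (eqxx a)) P; apply/eqP; apply: P => -[x|c] [y|d] //=.
  by move/eqP->.
move=> Hc Hy; have /card_le1_eqP := H _ Hc.
by move=> /(_ y a); rewrite !inE => ->.
Qed.

Lemma LS_ext_exists : left_special X w -> exists b, left_special X (rcons w b).
Proof.
rewrite /left_special /ell => /card_gt1P [a1 [a2 [H1 H2 ne]]].
move: H1 H2; rewrite !inE => H1 H2.
case: (boolP [exists b, 1 < ell X (rcons w b)]) => [/existsP[b Hb]|]; first by exists b.
rewrite negb_exists => /forallP Hall.
have E : a2 = a1.
  apply: (isolation H1) H2 => c _; by have := Hall c; rewrite -leqNgt.
by rewrite E eqxx in ne.
Qed.

Lemma LS_ext_ell b : left_special X (rcons w b) ->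
  (forall c, left_special X (rcons w c) -> c = b) ->
  ell X (rcons w b) = ell X w.
Proof.
move=> Hb Hu; apply/eqP; rewrite eqn_leq ell_rcons_le /=.
apply: subset_leq_card; apply/subsetP => a; rewrite !inE => Ha.
apply/negPn/negP => Hn.
move: (Hb); rewrite /left_special /ell => /card_gt1P [a1 [_ [H1 _ _]]].
move: H1; rewrite inE => H1.
have E : a1 = a.
  apply: (isolation Ha) (inL_pre H1) => c Hc.
  rewrite leqNgt; apply/negP => Hc'.
  by have E := Hu c Hc'; subst c; rewrite Hc in Hn.
by subst a1; rewrite H1 in Hn.
Qed.
End G.

Lemma arith1 s a c l : s + c = l -> a <= c -> 0 < a -> a - 1 + s + (c - a + 1) = l.
Proof. lia. Qed.

Section C.
Variable (A : finType) (X : config A -> Prop) (w : seq A).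
Local Notation e := (ext_edge X w).
Local Notation V := (ext_vertex X w).
Hypothesis tree : is_tree (ext_vertex X w) (ext_edge X w).

Definition La := [set a | inL X (a :: w)].
Definition Nb b := [set a | inL X (a :: rcons w b)].

Definition Qv (Bs : seq A) (v : A + A) : bool :=
  match v with inl _ => true | inr b => b \in Bs end.
Definition eB Bs : rel (A + A) := fun u v => [&& e u v, Qv Bs u & Qv Bs v].

Lemma eB_sym Bs : symmetric (eB Bs).
Proof. by move=> u v; rewrite /eB e_sym; case: (Qv Bs u); case: (Qv Bs v); rewrite ?andbF ?andbT. Qed.

Lemma Nb_sub b : Nb b \subset La.
Proof. by apply/subsetP=> a; rewrite !inE; apply: inL_pre. Qed.

Lemma no_cycle Bs b n1 n2 : b \notin Bs -> n1 \in Nb b -> n2 \in Nb b -> n1 != n2 ->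
  ~~ connect (eB Bs) (inl n1) (inl n2).
Proof.
move=> bB H1 H2 ne; apply/negP => /connectP [p pth Elast].
case: (shortenP pth) Elast => p' pth' up' _ Elast.
move: H1 H2; rewrite !inE => H1 H2.
case: tree => _ _ acyc.
have Qp : all (Qv Bs) p'.
  by apply: path_all_target pth' _ => u v /and3P[].
have Vp : all V p'.
  by apply: path_all_target pth' _ => u v /and3P[/e_V].
have pe : path e (inl n1) p'.
  by apply: sub_path pth' => u v /and3P[].
have := acyc [:: inr b, inl n1 & p'].
rewrite /= Vp (inL_suf H1) (inL_pre H1) /=.
rewrite rcons_path pe -Elast /= H1 H2.
have -> : inr b \notin p'.
  by apply/negP=> /(allP Qp) /=; apply/negP.
move: up'; rewrite /= => ->; rewrite ltnS ltnNge; move/(_ isT isT isT)/negP; apply.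
by case: p' {pth pth' Qp Vp pe} Elast => //= -[E]; rewrite E eqxx in ne.
Qed.

Lemma uf Bs : uniq Bs -> exists f : A -> A,
  \sum_(b <- Bs) (#|Nb b|).-1 + #|f @: La| = #|La| /\
  forall x y, x \in La -> y \in La -> f x = f y -> connect (eB Bs) (inl x) (inl y).
Proof.
elim: Bs => [|b Bs IH] /=.
  exists id; rewrite big_nil add0n imset_id; split=> // x y _ _ ->; exact: connect0.
move=> /andP[bB /IH [f [Hc Hs]]].
have sub' : forall u v, eB Bs u v -> eB (b :: Bs) u v.
  move=> u v /and3P[euv qu qv]; rewrite /eB euv /=.
  by case: u v qu qv {euv} => [a|c] [a'|d] /= qu qv; rewrite ?inE ?qu ?qv ?orbT.
have sub : subrel (connect (eB Bs)) (connect (eB (b :: Bs))).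
  by apply: connect_sub => u v /sub' /connect1.
have symc : connect_sym (eB Bs) by apply: sym_connect_sym; apply: eB_sym.
case: (set_0Vmem (Nb b)) => [N0|[a0 Ha0]].
  exists f; rewrite big_cons N0 cards0 /=; split=> // x y Hx Hy E.
  by apply: sub; apply: Hs.
have inj : {in Nb b &, injective f}.
  move=> x y Hx Hy E; apply/eqP; apply/negPn/negP => ne.
  have := no_cycle bB Hx Hy ne; rewrite Hs //.
    by apply: (subsetP (Nb_sub b)).
  by apply: (subsetP (Nb_sub b)).
pose f' x := if f x \in f @: Nb b then f a0 else f x.
have La0 : a0 \in La by apply: (subsetP (Nb_sub b)).
have img : f' @: La = (f @: La :\: f @: Nb b) :|: [set f a0].
  apply/setP => y; apply/imsetP/idP.
    move=> [x Hx ->]; rewrite /f' !inE; case: ifP => Hf; first by rewrite eqxx orbT.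
    by rewrite Hf imset_f.
  rewrite !inE => /orP[/andP[Hn /imsetP[x Hx E]]|/eqP->]; first subst y.
    by exists x => //; rewrite /f' (negbTE Hn).
  by exists a0 => //; rewrite /f' imset_f.
have subI : f @: Nb b \subset f @: La by apply: imsetS; apply: Nb_sub.
have cNb : #|f @: Nb b| = #|Nb b| by apply: card_in_imset.
have cI : #|f @: La| >= #|Nb b| by rewrite -cNb; apply: subset_leq_card.
have cNb0 : 0 < #|Nb b| by apply/card_gt0P; exists a0.
have cf' : #|f' @: La| = #|f @: La| - #|Nb b| + 1.
  rewrite img setUC cardsU1 cardsD (setIidPr subI) cNb !inE imset_f //=.
  by rewrite addnC.
exists f'; split.
  rewrite big_cons cf' -subn1; move: Hc cI cNb0.
  move: (\sum_(_ <- _) _) => S; move: #|Nb b| => a; move: #|_ @: La| => c; lia.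
move=> x y Hx Hy; rewrite /f'.
case: ifP => Hfx; case: ifP => Hfy.
- move: Hfx Hfy => /imsetP[n1 Hn1 E1] /imsetP[n2 Hn2 E2] _.
  have L1 : n1 \in La by apply: (subsetP (Nb_sub b)).
  have L2 : n2 \in La by apply: (subsetP (Nb_sub b)).
  apply: (connect_trans (sub _ _ (Hs _ _ Hx L1 E1))).
  apply: (@connect_trans _ _ (inr b)).
    by apply: connect1; move: Hn1; rewrite /eB inE /= mem_head => ->.
  apply: (@connect_trans _ _ (inl n2)).
    by apply: connect1; move: Hn2; rewrite /eB inE /= mem_head => ->.
  apply: sub; rewrite symc; exact: Hs.
- by move=> E; move: Hfy; rewrite -E imset_f.
- by move=> E; move: Hfx; rewrite E imset_f.
- by move=> E; apply: sub; apply: Hs.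
Qed.

Lemma core : \sum_(b : A) (#|Nb b|).-1 <= (#|La|).-1.
Proof.
have [f [H _]] := uf (enum_uniq A).
rewrite big_enum /= (eq_bigl predT) in H; last by move=> i; rewrite inE.
case: (set_0Vmem La) => [L0|[a Ha]].
  rewrite big1 // => b _; have := subset_leq_card (Nb_sub b).
  by rewrite L0 cards0 leqn0 => /eqP ->.
have : 0 < #|f @: La| by apply/card_gt0P; exists (f a); apply: imset_f.
move: H; move: (\sum_(_ | _) _) => S; move: #|_ @: La| => c; move: #|La| => l; lia.
Qed.
End C.

Lemma sum_eq_termwise (T : eqType) (s : seq T) (F G : T -> nat) :
  (forall x, x \in s -> F x <= G x) ->
  \sum_(x <- s) F x = \sum_(x <- s) G x -> forall x, x \in s -> F x = G x.
Proof.
elim: s => [|a s IH] // H; rewrite !big_cons => E x.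
have Ha : F a <= G a by apply: H; rewrite mem_head.
have Hs : \sum_(y <- s) F y <= \sum_(y <- s) G y.
  by rewrite big_seq [X in _ <= X]big_seq; apply: leq_sum => y ys; apply: H; rewrite inE ys orbT.
have Ea : F a = G a by lia.
rewrite inE => /orP[/eqP->//|xs]; apply: IH xs => //.
  by move=> y ys; apply: H; rewrite inE ys orbT.
lia.
Qed.

Lemma eventually_const (f : nat -> nat) d m :
  (forall n, m <= n -> f n <= f n.+1) -> (forall n, m <= n -> f n <= f m + d) ->
  exists N, m <= N /\ forall n, N <= n -> f n = f N.
Proof.
elim: d m => [|d IH] m inc bnd.
  exists m; split=> // n mn; apply/eqP; rewrite eqn_leq.
  have := bnd n mn; rewrite addn0 => -> /=.
  elim: n mn => [|n IHn]; first by rewrite leqn0 => /eqP->.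
  rewrite leq_eqVlt => /orP[/eqP<-//|mn]; exact: leq_trans (IHn mn) (inc _ mn).
have mono : forall n, m <= n -> f m <= f n.
  move=> n; elim: n => [|n IHn]; first by rewrite leqn0 => /eqP->.
  rewrite leq_eqVlt => /orP[/eqP<-//|mn]; exact: leq_trans (IHn mn) (inc _ mn).
case: (classic (forall n, m <= n -> f n = f m)) => [H|H]; first by exists m.
have [n [mn ne]] : exists n, m <= n /\ f n <> f m.
  apply: NNPP => C; apply: H => n mn; apply: NNPP => ne; apply: C; by exists n.
have lt : f m < f n by have := mono n mn; lia.
have bnd' : forall j, n <= j -> f j <= f n + d.
  by move=> j nj; have := bnd j (leq_trans mn nj); lia.
have [N [nN HN]] := IH n (fun j nj => inc j (leq_trans mn nj)) bnd'.
by exists N; split=> //; apply: leq_trans nN.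
Qed.

Section Count.
Variable (A : finType) (X : config A -> Prop) (m : nat).
Hypothesis Hm : forall w : seq A, inL X w -> m <= size w ->
    is_tree (ext_vertex X w) (ext_edge X w).

Fixpoint words n : seq (seq A) :=
  if n is n'.+1 then [seq rcons v b | v <- words n', b <- enum A] else [:: [::]].

Lemma size_words n v : v \in words n -> size v = n.
Proof.
elim: n v => [|n IH] v /=; first by rewrite inE => /eqP->.
by move/allpairsPdep => [u [b [uw _ ->]]]; rewrite size_rcons (IH _ uw).
Qed.

Lemma mem_words v : v \in words (size v).
Proof.
elim/last_ind: v => [|v b IH]; first by rewrite inE.
by rewrite size_rcons /=; apply: (allpairs_f_dep (fun v b => rcons v b)) IH _; rewrite mem_enum.
Qed.

Lemma sum_ext n (F : seq A -> nat) :
  \sum_(v <- words n.+1) F v = \sum_(v <- words n) \sum_(b : A) F (rcons v b).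
Proof.
rewrite /= big_allpairs_dep; apply: eq_bigr => v _.
by rewrite big_enum /=; apply: eq_bigl => b; rewrite inE.
Qed.

Definition cnt n := \sum_(v <- words n) (left_special X v : nat).
Definition Wt n := \sum_(v <- words n) (ell X v).-1.

Lemma W_dec n : m <= n -> Wt n.+1 <= Wt n.
Proof.
move=> mn; rewrite /Wt sum_ext big_seq [X in _ <= X]big_seq; apply: leq_sum => v vw.
case: (boolP (inL X v)) => Lv.
  have tr := Hm Lv (leq_trans mn (eq_leq (esym (size_words vw)))).
  exact: (core tr).
by rewrite big1 // => b _; rewrite ell_notL.
Qed.

Lemma c_le_W n : cnt n <= Wt n.
Proof.
apply: leq_sum => v _; rewrite /left_special; case: (ell X v) => [|[|k]] //.
Qed.

Lemma c_inc n : m <= n -> cnt n <= cnt n.+1.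
Proof.
move=> mn; rewrite /cnt sum_ext big_seq [X in _ <= X]big_seq; apply: leq_sum => v vw.
case: (boolP (left_special X v)) => // LS.
have tr := Hm (LS_inL LS) (leq_trans mn (eq_leq (esym (size_words vw)))).
have [b Hb] := LS_ext_exists tr LS.
by rewrite (bigD1 b) //= Hb.
Qed.

Lemma W_bound d : Wt (m + d) <= Wt m.
Proof.
elim: d => [|d IH]; first by rewrite addn0.
by rewrite addnS; apply: leq_trans (W_dec _) IH; rewrite leq_addr.
Qed.

Lemma stable : exists N, m <= N /\
  forall v, left_special X v -> N <= size v ->
  forall b c, left_special X (rcons v b) -> left_special X (rcons v c) -> b = c.
Proof.
have [N [mN HN]] : exists N, m <= N /\ forall n, N <= n -> cnt n = cnt N.
  apply: (eventually_const (d := Wt m)).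
    exact: c_inc.
  move=> n mn; apply: leq_trans (c_le_W n) _; rewrite -(subnKC mn).
  by apply: leq_trans (W_bound _) (leq_addl _ _).
exists N; split=> // v LS Nv b c Hb Hc; apply/eqP/negPn/negP => ne.
set n := size v.
have E : cnt n = cnt n.+1 by rewrite !HN // (leq_trans Nv).
move: E; rewrite /cnt sum_ext => E.
have H : forall u, u \in words n -> (left_special X u : nat) <= \sum_(b : A) (left_special X (rcons u b) : nat).
  move=> u uw; case: (boolP (left_special X u)) => // LSu.
  have tr := Hm (LS_inL LSu) (leq_trans mN (leq_trans Nv (eq_leq (esym (size_words uw))))).
  have [b' Hb'] := LS_ext_exists tr LSu.
  by rewrite (bigD1 b') //= Hb'.
have := sum_eq_termwise H E (mem_words v).
rewrite LS (bigD1 b) //= (bigD1 c) /=; last by rewrite eq_sym ne.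
by rewrite Hb Hc.
Qed.
End Count.

Section Ray.
Variable (A : finType) (X : config A -> Prop) (m N : nat) (a0 : A).
Hypothesis Hm : forall w : seq A, inL X w -> m <= size w ->
    is_tree (ext_vertex X w) (ext_edge X w).
Hypothesis mN : m <= N.
Hypothesis HN : forall v, left_special X v -> N <= size v ->
  forall b c, left_special X (rcons v b) -> left_special X (rcons v c) -> b = c.

Definition ext v := odflt a0 [pick b | left_special X (rcons v b)].
Definition step v := rcons v (ext v).

Lemma ext_spec v : left_special X v -> N <= size v ->
  forall c, left_special X (rcons v c) <-> c = ext v.
Proof.
move=> LS Nv.
have tr := Hm (LS_inL LS) (leq_trans mN Nv).
have [b Hb] := LS_ext_exists tr LS.
rewrite /ext; case: pickP => [b' Hb'|H]; last by rewrite H in Hb.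
by move=> c /=; split=> [Hc|->//]; apply: HN Hc Hb'.
Qed.

Lemma ext_ell v : left_special X v -> N <= size v -> ell X (rcons v (ext v)) = ell X v.
Proof.
move=> LS Nv; have tr := Hm (LS_inL LS) (leq_trans mN Nv).
apply: (LS_ext_ell tr); first by apply/(ext_spec LS Nv).
by move=> c /(ext_spec LS Nv).
Qed.

Lemma iter_size t u : size (iter t step u) = size u + t.
Proof. by elim: t => [|t IH] /=; rewrite ?addn0 // size_rcons IH addnS. Qed.

Lemma ray t v : left_special X v -> size v = N + t -> iter t step (take N v) = v.
Proof.
elim: t v => [|t IH] v LS sv /=; first by rewrite take_oversize // sv addn0.
case/lastP: v LS sv => [|v c] LS; first by rewrite addnS.
rewrite size_rcons addnS => -[sv].
have LSv := LS_prefix LS.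
rewrite -cats1 takel_cat ?sv ?leq_addr // IH // /step cats1.
have -> // : c = ext v.
by apply/(ext_spec LSv); rewrite ?sv ?leq_addr.
Qed.

Definition good (u1 u2 : seq A) s t := drop s (iter (t + s) step u2) == iter t step u1.

Lemma good_down u1 u2 s t : good u1 u2 s t.+1 -> good u1 u2 s t.
Proof.
rewrite /good addSn !iterS /step drop_rcons; last by rewrite iter_size; lia.
by move=> /eqP /rcons_inj [->].
Qed.

Lemma good_downs u1 u2 s t t' : t <= t' -> good u1 u2 s t' -> good u1 u2 s t.
Proof.
move=> tt'; rewrite -(subnKC tt'); elim: (t' - t) => [|d IH]; rewrite ?addn0 //.
by rewrite addnS => /good_down.
Qed.
End Ray.

Theorem mainTheorem7 (A : finType) (X : config A -> Prop) :
  shift_space X -> eventually_dendric X ->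
  forall k : nat, 1 <= k ->
  exists n : nat, 1 <= n /\
    forall p w : seq A, inL X p -> inL X w ->
      size p <= k -> n <= size w ->
      left_special X (p ++ w) -> left_special X w ->
      exists b : A,
        (forall c : A, left_special X (rcons w c) <-> c = b) /\
        (forall c : A, left_special X (rcons (p ++ w) c) <-> c = b) /\
        ell X (rcons (p ++ w) b) = ell X (p ++ w) /\
        ell X (rcons w b) = ell X w.
Proof.
move=> _ [m Hm] k k1.
case: (pickP (fun _ : A => true)) => [a0 _|none]; last first.
  exists 1; split=> // p w _ _ _ _ _; rewrite /left_special => /card_gt1P [x _].
  by have := none x.
have [N [mN HN]] := stable Hm.
pose T3 := (N.-tuple A * N.-tuple A * 'I_k.+1)%type.
pose goodT (tr : T3) t := good X a0 (val tr.1.1) (val tr.1.2) tr.2 t.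
have [Tf HTf] : exists Tf : T3 -> nat,
    forall tr, (forall t, goodT tr t) \/ ~~ goodT tr (Tf tr).
  exists (fun tr => match excluded_middle_informative (exists t, ~~ goodT tr t) with
                    | left h => xchoose h | right _ => 0 end).
  move=> tr; case: excluded_middle_informative => [h|h].
    by right; exact: xchooseP h.
  by left => t; apply/negPn/negP => H; apply: h; exists t.
exists (N + \max_(tr : T3) Tf tr).+1; split => //.
move=> p w _ _ pk nw LSpw LSw.
have Nw : N <= size w by lia.
have Npw : N <= size (p ++ w) by rewrite size_cat; lia.
pose tup v : N.-tuple A := insubd (nseq_tuple N a0) (take N v).
have tupE : forall v, N <= size v -> val (tup v) = take N v.
  by move=> v Nv; rewrite val_insubd size_takel // eqxx.
have ps : size p < k.+1 by rewrite ltnS.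
pose tr : T3 := (tup w, tup (p ++ w), Ordinal ps).
pose t := size w - N.
have sw : size w = N + t by rewrite /t subnKC.
have spw : size (p ++ w) = N + (t + size p) by rewrite size_cat sw; lia.
have Ht : goodT tr t.
  rewrite /goodT /good /= !tupE // (ray a0 Hm mN HN LSw sw) (ray a0 Hm mN HN LSpw spw).
  by rewrite drop_size_cat.
have allg : forall t', goodT tr t'.
  case: (HTf tr) => // H; exfalso.
  have le : Tf tr <= t.
    have := leq_bigmax tr (F := Tf); rewrite /t; move: nw.
    set M := \max_(i : T3) Tf i; lia.
  have Hg : goodT tr (Tf tr) by exact: (good_downs mN le Ht).
  by rewrite Hg in H.
have := allg t.+1.
rewrite /goodT /good /= !tupE // (ray a0 Hm mN HN LSw sw)
  (ray a0 Hm mN HN LSpw spw) /step drop_rcons ?size_cat ?leq_addr //.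
rewrite drop_size_cat // => /eqP /rcons_inj [E].
exists (ext X a0 w); split; last split; last split.
- exact: (ext_spec a0 Hm mN HN LSw Nw).
- by rewrite -E; exact: (ext_spec a0 Hm mN HN LSpw Npw).
- by rewrite -E; exact: (ext_ell a0 Hm mN HN LSpw Npw).
- exact: (ext_ell a0 Hm mN HN LSw Nw).
Qed.
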